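(* The Pansiot pre-antipalindromes of length $3$ are exactly $001$, $011$, $100$, and $110$. Moreover, for every integer $n\geq 1$: (i) the Pansiot pre-antipalindromes of length $4n+1$ are precisely the words of the form $0u0$ or $1u1$, where $u$ is a Pansiot pre-antipalindrome of length $4n-1$; (ii) the Pansiot pre-antipalindromes of length $4n+3$ are precisely the words of the form $0u1$ or $1u0$, where $u$ is a Pansiot pre-antipalindrome of length $4n+1$.
   Context: Words are over the binary alphabet $\{0,1\}$, with letters also read as the integers $0$ and $1$. For a nonempty binary word $u=u_1u_2\cdots u_n$, its Pansiot coding is the binary word $c_1c_2\cdots c_{n-1}$ of length $n-1$ with $c_i=|u_i-u_{i+1}|$ (equivalently $c_i=u_i+u_{i+1}\bmod 2$). A binary word $x=x_1\cdots x_m$ is an anti-palindrome if $x_i\neq x_{m+1-i}$ for every $i\in\{1,\ldots,m\}$. A binary word is a Pansiot pre-antipalindrome if its Pansiot coding is an anti-palindrome. *)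

(* Defs.v *)
From mathcomp Require Import all_boot.
Set Implicit Arguments. Unset Strict Implicit. Unset Printing Implicit Defensive.

(* Binary words: seq bool, with false = letter 0 and true = letter 1. *)

Definition pansiot (u : seq bool) : seq bool :=
  [seq (p.1 != p.2) | p <- zip u (behead u)].

(* x is an anti-palindrome: x_i <> x_{m+1-i} for every i (0-indexed here). *)
Definition antipalindrome (x : seq bool) : Prop :=
  forall i, i < size x -> nth false x i != nth false x (size x - 1 - i).

Definition pansiot_pre_antipalindrome (u : seq bool) : Prop :=
  antipalindrome (pansiot u).

(* Main.v *)
Require Import Defs.
From mathcomp Require Import all_boot zify.
Set Warnings "-notation-overridden".

Lemma antiE x : antipalindrome x <-> map negb (rev x) = x.
Proof.
split=> [H|H].
  apply: (@eq_from_nth _ false); rewrite ?size_map ?size_rev // => i Hi.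
  rewrite (nth_map false) ?size_rev // nth_rev //.
  have := H i Hi; have -> : size x - i.+1 = size x - 1 - i by lia.
  by case: (nth false x i); case: (nth false x _).
move=> i Hi; rewrite -{1}H (nth_map false) ?size_rev // nth_rev //.
have -> : size x - i.+1 = size x - 1 - i by lia.
by case: (nth false x _).
Qed.

Lemma anti_cons x q y : antipalindrome (x :: rcons q y) <-> y = ~~ x /\ antipalindrome q.
Proof.
rewrite !antiE rev_cons rev_rcons /= map_rcons.
split.
  move=> H; have /= H1 := f_equal (head x) H; have /= /eqP := f_equal behead H.
  by rewrite eqseq_rcons => /andP[/eqP Hq /eqP Hy]; split.
by case=> -> Hq; rewrite negbK Hq.
Qed.

Lemma pansiot_cons x z s : pansiot (x :: z :: s) = (x != z) :: pansiot (z :: s).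
Proof. by []. Qed.

Lemma pansiot_rcons x s y : pansiot (rcons (x :: s) y) = rcons (pansiot (x :: s)) (last x s != y).
Proof.
elim: s x => [|z s IH] x //=.
by rewrite pansiot_cons -rcons_cons IH.
Qed.

Lemma size_pansiot s : size (pansiot s) = (size s).-1.
Proof. rewrite /pansiot size_map size_zip size_behead; case: s => //= _ s; lia. Qed.

Lemma count_pansiot x s : odd (count id (pansiot (x :: s))) = (x != last x s).
Proof.
elim: s x => [|z s IH] x /=; first by rewrite eqxx.
rewrite -/(pansiot (z :: s)) oddD IH /=.
by case: x; case: z; case: (last _ s).
Qed.

Lemma count_anti k p : size p = k.*2 -> antipalindrome p -> odd (count id p) = odd k.
Proof.
elim: k p => [|k IH] p.
  by case: p.
case: p => // x s; case/lastP: s => [|q y] //.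
rewrite /= size_rcons doubleS => Hs0; have Hs : size q = k.*2 by lia.
case/anti_cons => -> Hq.
rewrite -cats1 count_cat /= !oddD (IH q Hs Hq).
by case: x; case: (odd k).
Qed.

Lemma key a z v b : pansiot_pre_antipalindrome (a :: rcons (z :: v) b) <->
  pansiot_pre_antipalindrome (z :: v) /\ (last z v != b) = (a == z).
Proof.
rewrite /pansiot_pre_antipalindrome -rcons_cons.
have -> : pansiot (a :: rcons (z :: v) b) = (a != z) :: pansiot (rcons (z :: v) b) by [].
rewrite pansiot_rcons anti_cons.
by split; case=> H1 H2; split=> //; move: H1 H2 => /=; case: a; case: z.
Qed.

Lemma par z v : pansiot_pre_antipalindrome (z :: v) -> ~~ odd (size v) ->
  (z != last z v) = odd (size v)./2.
Proof.
move=> H Hv; rewrite -count_pansiot; apply: count_anti => //.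
rewrite size_pansiot /=.
by rewrite -{1}(odd_double_half (size v)) (negbTE Hv).
Qed.

Lemma inj3 (a : bool) (s : seq bool) b a' s' b' : a :: rcons s b = a' :: rcons s' b' -> [/\ a = a', s = s' & b = b'].
Proof.
move=> H; have /= H1 := f_equal (head a) H; have /= /eqP := f_equal behead H.
by rewrite eqseq_rcons => /andP[/eqP Hq /eqP Hy]; split.
Qed.
Lemma B1 (a b z l : bool) : (z != l) = true -> (l != b) = (a == z) -> a = b.
Proof. by case: a; case: b; case: z; case: l. Qed.
Lemma B2 (a z l : bool) : (z != l) = true -> (l != a) = (a == z).
Proof. by case: a; case: z; case: l. Qed.
Lemma B3 (a b z l : bool) : (z != l) = false -> (l != b) = (a == z) -> a = ~~ b.
Proof. by case: a; case: b; case: z; case: l. Qed.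
Lemma B4 (b z l : bool) : (z != l) = false -> (l != b) = (~~ b == z).
Proof. by case: b; case: z; case: l. Qed.

Theorem mainTheorem2 :
  (forall w : seq bool, size w = 3 ->
     (pansiot_pre_antipalindrome w <->
        w = [:: false; false; true] \/ w = [:: false; true; true] \/
        w = [:: true; false; false] \/ w = [:: true; true; false]))
  /\
  (forall n : nat, 1 <= n ->
     (forall w : seq bool, size w = 4 * n + 1 ->
        (pansiot_pre_antipalindrome w <->
           exists u : seq bool, size u = 4 * n - 1 /\ pansiot_pre_antipalindrome u /\
             (w = false :: rcons u false \/ w = true :: rcons u true)))
     /\
     (forall w : seq bool, size w = 4 * n + 3 ->
        (pansiot_pre_antipalindrome w <->
           exists u : seq bool, size u = 4 * n + 1 /\ pansiot_pre_antipalindrome u /\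
             (w = false :: rcons u true \/ w = true :: rcons u false)))).
Proof.
split.
  case=> [|a [|z [|b [|]]]] //= _.
  have := key a z [::] b; rewrite /= => ->.
  have T : forall z, pansiot_pre_antipalindrome [:: z] by move=> ? i.
  by case: a; case: z; case: b; (split => [[_ H]|H]; [ | split; [exact: T|]]); move: H => /=; intuition discriminate.
move=> n Hn; split=> w Hw.
- move: Hw; case: w => [|a s] Hw; first by move: Hw => /=; lia.
  move: Hw; case/lastP: s => [|u b] Hw; first by move: Hw => /=; lia.
  move: Hw; case: u => [|z v] Hw; first by move: Hw => /=; rewrite ?size_rcons /=; lia.
  move: Hw; rewrite /= size_rcons /= => Hw.
  have Hv : size v = ((n.-1).*2.+1).*2 by rewrite -!muln2; lia.
  have Hpar : odd (size v)./2 = true by rewrite Hv -[_./2]/(half (double _)) doubleK ?odd_double //= odd_double.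
  have Hodd : ~~ odd (size v) by rewrite Hv odd_double.
  rewrite key; split.
    case=> Hu E; exists (z :: v); split; first by rewrite /=; lia.
    split=> //; have Eab := B1 _ _ _ _ (etrans (par _ _ Hu Hodd) Hpar) E.
    by subst; clear E; case: b; auto.
  case=> u [Hs [Hu E]].
  have [E1 E2] : a = b /\ u = z :: v.
    by case: E => E; rewrite -rcons_cons in E; case: (inj3 _ _ _ _ _ _ E) => E1 E2 E3; subst.
  subst; split=> //; apply: B2; rewrite par // Hpar.
- move: Hw; case: w => [|a s] Hw; first by move: Hw => /=; lia.
  move: Hw; case/lastP: s => [|u b] Hw; first by move: Hw => /=; lia.
  move: Hw; case: u => [|z v] Hw; first by move: Hw => /=; rewrite ?size_rcons /=; lia.
  move: Hw; rewrite /= size_rcons /= => Hw.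
  have Hv : size v = (n.*2).*2 by rewrite -!muln2; lia.
  have Hpar : odd (size v)./2 = false by rewrite Hv -[_./2]/(half (double _)) doubleK ?odd_double //= odd_double.
  have Hodd : ~~ odd (size v) by rewrite Hv odd_double.
  rewrite key; split.
    case=> Hu E; exists (z :: v); split; first by rewrite /=; lia.
    split=> //; have Eab := B3 _ _ _ _ (etrans (par _ _ Hu Hodd) Hpar) E.
    by subst; clear E; case: b; auto.
  case=> u [Hs [Hu E]].
  have [E1 E2] : a = ~~ b /\ u = z :: v.
    by case: E => E; rewrite -rcons_cons in E; case: (inj3 _ _ _ _ _ _ E) => E1 E2 E3; subst.
  subst; split=> //; apply: B4; rewrite par // Hpar.
Qed.
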